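(* Let $N\ge1$. The maps $T_\Lambda$, $R_\sigma$, $M_\alpha$ ($\Lambda\subseteq P_N$, $\sigma\in S_N$, $\alpha\in\mathbb{C}^*$) all lie in $\mathfrak{G}_N:=\big[\mathrm{Aut}(\mathbb{D}_N)_\pi\cap\mathrm{N}(\mathfrak{M}_N)\big]\mathfrak{M}_N$. Furthermore, the set $G_N:=\mathfrak{T}_N\mathfrak{R}_N\mathfrak{M}_N$ equipped with the operation $$T_{\Lambda_1}R_{\sigma_1}M_{\alpha_1}\cdot T_{\Lambda_2}R_{\sigma_2}M_{\alpha_2}=T_{\Lambda_1\oplus\sigma_1(\Lambda_2)}R_{\sigma_1\sigma_2}M_{\alpha_1\alpha_2}$$ is a subgroup of $\mathfrak{G}_N$ isomorphic to $\big(\{\pm1\}^N\rtimes_\varphi S_N\big)\times\mathbb{C}^*$, where $\varphi_\sigma(\varepsilon_1,\dots,\varepsilon_N)=(\varepsilon_{\sigma^{-1}(1)},\dots,\varepsilon_{\sigma^{-1}(N)})$.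
   Context: $P_N=\{1,\dots,N\}$; vectors are functions on $P_N$, $v^{-1}[S]=\{\ell:v_\ell\in S\}$; $\mathrm{Tr}(v,\Lambda):=\sum_{\ell\in\Lambda}v_\ell$; $\oplus$ is symmetric difference. $\mathcal{C}:=\{z:\mathrm{Re}(z)>0\text{ or }z\in i\mathbb{R}_{>0}\}$. $\mathbb{D}_N:=\{(w,a,\theta)\in\mathbb{C}\times\mathbb{C}^N\times\mathbb{R}^N: a^{-1}[0]\subseteq\theta^{-1}[\mathbb{R}\smallsetminus\mathbb{Z}]\}$; $\pi(w,a,\theta):=w-\mathrm{Tr}(a,a^{-1}[-\mathcal{C}])$. $\mathrm{Aut}(\mathbb{D}_N)$ is the group of homeomorphisms of $\mathbb{D}_N$; $\mathrm{Aut}(\mathbb{D}_N)_\pi:=\{g:\pi\circ g=\pi\}$. $T_\Lambda(w,a,\theta):=(w-\mathrm{Tr}(a,\Lambda),a\,d(\Lambda),\theta\,d(\Lambda))$ with $d(\Lambda)$ diagonal with entry $-1$ at $\ell\in\Lambda$ and $1$ otherwise; $R_\sigma(w,a,\theta):=(w,a\,r(\sigma),\theta\,r(\sigma))$ with $r(\sigma)$ the matrix whose $\ell$-th column is the $\sigma^{-1}(\ell)$-th column of the identity; $M_\alpha(w,a,\theta):=(\alpha w,\alpha a,\theta)$. $\mathfrak{T}_N,\mathfrak{R}_N,\mathfrak{M}_N$ are the groups generated by the $T_\Lambda$, the $R_\sigma$, the $M_\alpha$ respectively; $\mathrm{N}(\mathfrak{M}_N)$ is the normalizer of $\mathfrak{M}_N$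 in $\mathrm{Aut}(\mathbb{D}_N)$. *)

(* Defs.v *)
From HB Require Import structures.
From mathcomp Require Import all_boot all_order all_algebra fingroup perm.
From mathcomp Require Import all_classical all_reals all_analysis.
From mathcomp Require Import complex.
Import Order.TTheory GRing.Theory Num.Theory.
Import numFieldTopology.Exports.

Set Implicit Arguments.
Unset Strict Implicit.
Unset Printing Implicit Defensive.

Local Open Scope ring_scope.
Local Open Scope complex_scope.
Local Open Scope classical_set_scope.

Definition Cx (R : realType) := R[i].
HB.instance Definition _ (R : realType) :=
  PseudoPointedMetric.copy (Cx R) ((R[i])^o).
HB.instance Definition _ (R : realType) :=
  GRing.ClosedField.copy (Cx R) (R[i]).
HB.instance Definition _ (R : realType) :=
  Num.ClosedField.copy (Cx R) (R[i]).

Section Defs.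
Variables (R : realType) (N : nat).
Local Notation C := (Cx R).

(* ambient space C x C^N x R^N (vectors are row vectors indexed by 'I_N,
   i.e. P_N = {0,...,N-1}) *)
Definition Amb := (C * 'rV[C]_N * 'rV[R]_N)%type.

Definition Tr (K : nmodType) (v : 'rV[K]_N) (L : {set 'I_N}) : K :=
  \sum_(l in L) v 0 l.

Definition inCC (z : C) : bool :=
  (0 < complex.Re z) || ((complex.Re z == 0) && (0 < complex.Im z)).

Definition inD (x : Amb) : bool :=
  [forall l, (x.1.2 0 l == 0) ==> (x.2 0 l \isn't a Num.int)].
Definition Dset : set Amb := [set x | inD x].

Definition piA (x : Amb) : C :=
  x.1.1 - Tr x.1.2 [set l | inCC (- x.1.2 0 l)].

Definition dmx (K : pzRingType) (L : {set 'I_N}) : 'M[K]_N :=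
  \matrix_(i, j) (if i == j then (if i \in L then -1 else 1) else 0).
Definition rmx (K : pzRingType) (s : 'S_N) : 'M[K]_N :=
  \matrix_(k, l) ((k == (s^-1)%g l)%:R).

Definition TA (L : {set 'I_N}) (x : Amb) : Amb :=
  (x.1.1 - Tr x.1.2 L, x.1.2 *m dmx C L, x.2 *m dmx R L).
Definition RA (s : 'S_N) (x : Amb) : Amb :=
  (x.1.1, x.1.2 *m rmx C s, x.2 *m rmx R s).
Definition MA (al : C) (x : Amb) : Amb :=
  (al * x.1.1, al *: x.1.2, x.2).

Local Notation Dty := (set_type Dset).

(* restriction of a map of the ambient space to D_N; the fallback branch is
   never used for the maps below when they preserve D_N (always for T, R,
   and for M_alpha with alpha <> 0). *)
Definition liftD (f : Amb -> Amb) (x : Dty) : Dty :=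
  match pselect (f (sval x) \in Dset) with
  | left h => exist _ (f (sval x)) h
  | right _ => x
  end.

Definition T_ (L : {set 'I_N}) : Dty -> Dty := liftD (TA L).
Definition R_ (s : 'S_N) : Dty -> Dty := liftD (RA s).
Definition M_ (al : C) : Dty -> Dty := liftD (MA al).

Definition Aut : set (Dty -> Dty) :=
  [set f : Dty -> Dty | exists g : Dty -> Dty,
     [/\ cancel f g, cancel g f, continuous f & continuous g]].

Definition Aut_pi : set (Dty -> Dty) :=
  [set f : Dty -> Dty | Aut f /\ forall x, piA (sval (f x)) = piA (sval x)].

Definition subgroup (H : set (Dty -> Dty)) : Prop :=
  [/\ H `<=` Aut, H id,
      (forall f g, H f -> H g -> H (f \o g))
    & (forall f, H f -> exists2 g, H g & (f \o g = id /\ g \o f = id))].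

Definition gen (S : set (Dty -> Dty)) : set (Dty -> Dty) :=
  [set f : Dty -> Dty | forall H, subgroup H -> S `<=` H -> H f].

Definition setmul (A B : set (Dty -> Dty)) : set (Dty -> Dty) :=
  [set h : Dty -> Dty | exists f g, [/\ A f, B g & h = f \o g]].

Definition normalizer (H : set (Dty -> Dty)) : set (Dty -> Dty) :=
  [set g : Dty -> Dty | Aut g /\ exists h : Dty -> Dty,
     [/\ cancel g h, cancel h g & [set g \o m \o h | m in H] = H]].

Definition frakT := gen [set T_ L | L in [set: {set 'I_N}]].
Definition frakR := gen [set R_ s | s in [set: 'S_N]].
Definition frakM := gen [set M_ al | al in [set al : C | al != 0]].

Definition frakG := setmul (Aut_pi `&` normalizer frakM) frakM.
Definition GN := setmul (setmul frakT frakR) frakM.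

Definition symdiff (A B : {set 'I_N}) : {set 'I_N} := (A :\: B) :|: (B :\: A).

(* composition of permutations: (permcomp s t) l = s (t l)  (mathcomp's
   (t * s)%g, since mathcomp multiplies permutations left-to-right) *)
Definition permcomp (s t : 'S_N) : 'S_N := (t * s)%g.

Definition SP := ({ffun 'I_N -> int} * 'S_N * C)%type.
Definition SPcarrier : set SP :=
  [set x : SP | [forall l, (x.1.1 l == 1%:Z) || (x.1.1 l == - 1%:Z)] && (x.2 != 0)].
Definition phi (s : 'S_N) (e : {ffun 'I_N -> int}) : {ffun 'I_N -> int} :=
  [ffun l => e ((s^-1)%g l)].
Definition SPmul (x y : SP) : SP :=
  ([ffun l => x.1.1 l * phi x.1.2 y.1.1 l], permcomp x.1.2 y.1.2, x.2 * y.2).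

End Defs.

Arguments Amb : clear implicits.
Arguments inD : clear implicits.
Arguments Dset : clear implicits.
Arguments piA : clear implicits.
Arguments TA : clear implicits.
Arguments RA : clear implicits.
Arguments MA : clear implicits.
Arguments liftD : clear implicits.
Arguments T_ : clear implicits.
Arguments R_ : clear implicits.
Arguments M_ : clear implicits.
Arguments Aut : clear implicits.
Arguments Aut_pi : clear implicits.
Arguments subgroup : clear implicits.
Arguments gen : clear implicits.
Arguments setmul : clear implicits.
Arguments normalizer : clear implicits.
Arguments frakT : clear implicits.
Arguments frakR : clear implicits.
Arguments frakM : clear implicits.
Arguments frakG : clear implicits.
Arguments GN : clear implicits.
Arguments symdiff : clear implicits.
Arguments permcomp : clear implicits.
Arguments SP : clear implicits.
Arguments SPcarrier : clear implicits.
Arguments phi : clear implicits.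
Arguments SPmul : clear implicits.

(* Main.v *)
Require Import Defs.
From HB Require Import structures.
From mathcomp Require Import all_boot all_order all_algebra fingroup perm.
From mathcomp Require Import all_classical all_reals all_analysis.
From mathcomp Require Import complex.
Import Order.TTheory GRing.Theory Num.Theory.
Import numFieldTopology.Exports.
Local Open Scope ring_scope.
Local Open Scope classical_set_scope.
Set Implicit Arguments.
Unset Strict Implicit.
Lemma cont_mx (X T : topologicalType) m n (f : X -> 'M[T]_(m,n)) :
  (forall i j, continuous (fun x => f x i j)) -> continuous f.
Proof.
move=> cf x A [P HP sPA].
have H : \forall y \near x, forall i j, P i j (f y i j).
  apply: filter_forall => i; apply: filter_forall => j.
  exact: (cf i j x _ (HP i j)).
by apply: filterS H => y Hy; apply: sPA.
Qed.

Lemma cont_entry (T : topologicalType) m n i j :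
  continuous (fun M : 'M[T]_(m,n) => M i j).
Proof.
move=> M U HU.
exists (fun i' j' => if (i' == i) && (j' == j) then U else setT).
  move=> i' j'; case: ifP => [/andP[/eqP -> /eqP ->]//|_]; exact: filterT.
by move=> M' /(_ i j); rewrite !eqxx.
Qed.

Lemma cont_pair (X Y Z : topologicalType) (f : X -> Y) (g : X -> Z) :
  continuous f -> continuous g -> continuous (fun x => (f x, g x)).
Proof. by move=> cf cg x; apply: cvg_pair; [exact: cf|exact: cg]. Qed.

Lemma cont_fst (X Y : topologicalType) : continuous (@fst X Y).
Proof. by move=> x; exact: cvg_fst. Qed.
Lemma cont_snd (X Y : topologicalType) : continuous (@snd X Y).
Proof. by move=> x; exact: cvg_snd. Qed.

Section S.

Variable R : realType.
Local Notation C := (Cx R).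
Lemma contN_C (X : topologicalType) (f : X -> C) : continuous f -> continuous (fun x => - f x).
Proof. move=> cf x. exact: (@continuousN _ (R[i])^o _ f x (cf x)). Qed.
Lemma contD_C (X : topologicalType) (f g : X -> C) : continuous f -> continuous g -> continuous (fun x => f x + g x).
Proof. move=> cf cg x. exact: (@continuousD _ (R[i])^o _ f g x (cf x) (cg x)). Qed.
Lemma contM_C (X : topologicalType) (f : X -> C) (a : C) : continuous f -> continuous (fun x => a * f x).
Proof. move=> cf x. 
have := (@continuousM (R[i]) _ (fun _ => a) f x (@cst_continuous _ _ a x) (cf x)). exact.
Qed.
Lemma contN_R (X : topologicalType) (f : X -> R) : continuous f -> continuous (fun x => - f x).
Proof. move=> cf x. exact: (@continuousN _ R^o _ f x (cf x)). Qed.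

Lemma cont_sum (X : topologicalType) (I : eqType) (r : seq I) (P : pred I) (F : I -> X -> C) :
  (forall i, continuous (F i)) -> continuous (fun x => \sum_(i <- r | P i) F i x).
Proof.
move=> cF; elim: r => [|i r IH].
  have -> : (fun x => \sum_(i <- [::] | P i) F i x) = (fun=> 0) by apply: funext => x; rewrite big_nil.
  exact: cst_continuous.
have -> : (fun x => \sum_(j <- i :: r | P j) F j x) = (fun x => if P i then F i x + \sum_(j <- r | P j) F j x else \sum_(j <- r | P j) F j x).
  by apply: funext => x; rewrite big_cons.
case: (P i); last exact: IH.
exact: (@contD_C _ _ _ (cF i) IH).
Qed.
End S.
Section P.
Variables (R : realType) (N : nat).
Local Notation C := (Cx R).
Local Notation Dty := (set_type (Dset R N)).

Lemma mul_dmx (K : pzRingType) (v : 'rV[K]_N) L l :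
  (v *m dmx K L) 0 l = if l \in L then - v 0 l else v 0 l.
Proof.
rewrite mxE (bigD1 l) //= big1 => [|k kl]; last by rewrite mxE (negbTE kl) mulr0.
rewrite mxE eqxx addr0; case: ifP => _; by rewrite ?mulrN1 ?mulr1.
Qed.

Lemma mul_rmx (K : pzRingType) (v : 'rV[K]_N) s l :
  (v *m rmx K s) 0 l = v 0 ((s^-1)%g l).
Proof.
rewrite mxE (bigD1 ((s^-1)%g l)) //= big1 => [|k kl]; last by rewrite mxE (negbTE kl) mulr0.
by rewrite mxE eqxx addr0 mulr1.
Qed.

Lemma TA_D L x : inD R N x -> inD R N (TA R N L x).
Proof.
move=> /forallP H; apply/forallP => l; rewrite /TA /= !mul_dmx.
have := H l; case: (l \in L) => //.
by rewrite oppr_eq0 rpredN.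
Qed.

Lemma RA_D s x : inD R N x -> inD R N (RA R N s x).
Proof.
move=> /forallP H; apply/forallP => l; rewrite /RA /= !mul_rmx; exact: H.
Qed.

Lemma MA_D a x : a != 0 -> inD R N x -> inD R N (MA R N a x).
Proof.
move=> a0 /forallP H; apply/forallP => l; rewrite /MA /= mxE mulf_eq0 (negbTE a0).
exact: H.
Qed.

Lemma TA_TA L1 L2 x : TA R N L1 (TA R N L2 x) = TA R N (symdiff N L1 L2) x.
Proof.
case: x => [[w a] t]; rewrite /TA /=; congr (_, _, _).
- rewrite /Tr -addrA -opprD; congr (_ - _).
  rewrite big_mkcond [X in _ + X = _]big_mkcond [X in _ = X]big_mkcond -big_split.
  apply: eq_bigr => l _; rewrite mul_dmx /symdiff !inE.
  by case: (l \in L1); case: (l \in L2) => /=; rewrite ?addr0 ?add0r ?subrr.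
- apply/rowP => l; rewrite !mul_dmx /symdiff !inE.
  by case: (l \in L1); case: (l \in L2) => /=; rewrite ?opprK.
- apply/rowP => l; rewrite !mul_dmx /symdiff !inE.
  by case: (l \in L1); case: (l \in L2) => /=; rewrite ?opprK.
Qed.

Lemma mem_permset (s : 'S_N) (L : {set 'I_N}) l : (l \in s @: L) = ((s^-1)%g l \in L).
Proof. by rewrite -{1}(permKV s l) mem_imset //; exact: perm_inj. Qed.

Lemma RA_TA s L x : RA R N s (TA R N L x) = TA R N (s @: L) (RA R N s x).
Proof.
case: x => [[w a] t]; rewrite /TA /RA /=; congr (_, _, _).
- congr (_ - _); rewrite /Tr.
  rewrite big_mkcond [RHS]big_mkcond [RHS](reindex_inj (@perm_inj _ s)) /=.
  by apply: eq_bigr => l _; rewrite mul_rmx permK mem_permset permK.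
- by apply/rowP => l; rewrite !mul_dmx !mul_rmx mul_dmx mem_permset.
- by apply/rowP => l; rewrite !mul_dmx !mul_rmx mul_dmx mem_permset.
Qed.

Lemma RA_RA s1 s2 x : RA R N s1 (RA R N s2 x) = RA R N (permcomp N s1 s2) x.
Proof.
case: x => [[w a] t]; rewrite /RA /permcomp /=; congr (_, _, _);
  by apply/rowP => l; rewrite !mul_rmx invMg permM.
Qed.

Lemma MA_TA al L x : MA R N al (TA R N L x) = TA R N L (MA R N al x).
Proof.
case: x => [[w a] t]; rewrite /TA /MA /=; congr (_, _, _).
- rewrite mulrBr /Tr mulr_sumr; congr (_ - _); apply: eq_bigr => l _; by rewrite mxE.
- by apply/rowP => l; rewrite [LHS]mxE !mul_dmx mxE; case: ifP; rewrite ?mulrN.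
Qed.

Lemma MA_RA al s x : MA R N al (RA R N s x) = RA R N s (MA R N al x).
Proof.
case: x => [[w a] t]; rewrite /RA /MA /=; congr (_, _, _).
by apply/rowP => l; rewrite [LHS]mxE !mul_rmx mxE.
Qed.

Lemma MA_MA a b x : MA R N a (MA R N b x) = MA R N (a * b) x.
Proof.
case: x => [[w v] t]; rewrite /MA /=; congr (_, _, _); first by rewrite mulrA.
by rewrite scalerA.
Qed.

Lemma TA0 x : TA R N (finset.set0) x = x.
Proof.
case: x => [[w a] t]; rewrite /TA /=; congr (_, _, _).
- by rewrite /Tr big_set0 subr0.
- by apply/rowP => l; rewrite mul_dmx inE.
- by apply/rowP => l; rewrite mul_dmx inE.
Qed.

Lemma RA1 x : RA R N 1%g x = x.
Proof.
case: x => [[w a] t]; rewrite /RA /=; congr (_, _, _);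
  by apply/rowP => l; rewrite mul_rmx invg1 perm1.
Qed.

Lemma MA1 x : MA R N 1 x = x.
Proof. case: x => [[w a] t]; by rewrite /MA /= mul1r scale1r. Qed.


Definition presD (f : Amb R N -> Amb R N) := forall x, inD R N x -> inD R N (f x).

Lemma Dext (x y : Dty) : sval x = sval y -> x = y.
Proof.
move: x y => [x hx] [y hy] /= E; subst y; congr exist; exact: Prop_irrelevance.
Qed.

Lemma liftD_val f : presD f -> forall x, sval (liftD R N f x) = f (sval x).
Proof.
move=> pf [x hx]; rewrite /liftD /=; case: pselect => //= n; exfalso; apply: n.
apply/mem_set; apply: pf; exact: (set_mem hx).
Qed.

Lemma cont_comp (X Y Z : topologicalType) (f : X -> Y) (g : Y -> Z) :
  continuous f -> continuous g -> continuous (g \o f).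
Proof. by move=> cf cg x; apply: continuous_comp; [exact: cf|exact: cg]. Qed.

Lemma cont_liftD f : presD f -> continuous f -> continuous (liftD R N f).
Proof.
move=> pf cf.
apply: (@continuous_comp_initial _ _ _ (@set_val _ (Dset R N))).
have -> : set_val \o liftD R N f = f \o set_val.
  by apply: funext => x; rewrite /= set_valE; exact: liftD_val.
apply: cont_comp => //; exact: initial_continuous.
Qed.


Lemma c_w : continuous (fun x : Amb R N => x.1.1).
Proof. exact: (cont_comp (@cont_fst _ _) (@cont_fst _ _)). Qed.
Lemma c_a j : continuous (fun x : Amb R N => x.1.2 0 j).
Proof.
exact: (cont_comp (cont_comp (@cont_fst _ _) (@cont_snd _ _)) (@cont_entry _ 1 N 0 j)).
Qed.
Lemma c_t j : continuous (fun x : Amb R N => x.2 0 j).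
Proof. exact: (cont_comp (@cont_snd _ _) (@cont_entry _ 1 N 0 j)). Qed.

Lemma cont_TA L : continuous (TA R N L).
Proof.
rewrite /TA; apply: cont_pair; [apply: cont_pair|].
- apply: contD_C; first exact: c_w. apply: contN_C; rewrite /Tr; apply: cont_sum => l; exact: c_a.
- apply: cont_mx => i j; rewrite (ord1 i).
  have -> : (fun x : Amb R N => (x.1.2 *m dmx C L) 0 j) =
            (fun x => if j \in L then - x.1.2 0 j else x.1.2 0 j).
    by apply: funext => x; rewrite mul_dmx.
  case: (j \in L); [apply: contN_C; exact: c_a|exact: c_a].
- apply: cont_mx => i j; rewrite (ord1 i).
  have -> : (fun x : Amb R N => (x.2 *m dmx R L) 0 j) =
            (fun x => if j \in L then - x.2 0 j else x.2 0 j).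
    by apply: funext => x; rewrite mul_dmx.
  case: (j \in L); [apply: contN_R; exact: c_t|exact: c_t].
Qed.

Lemma cont_RA s : continuous (RA R N s).
Proof.
rewrite /RA; apply: cont_pair; [apply: cont_pair|].
- exact: c_w.
- apply: cont_mx => i j; rewrite (ord1 i).
  have -> : (fun x : Amb R N => (x.1.2 *m rmx C s) 0 j) = (fun x => x.1.2 0 ((s^-1)%g j)).
    by apply: funext => x; rewrite mul_rmx.
  exact: c_a.
- apply: cont_mx => i j; rewrite (ord1 i).
  have -> : (fun x : Amb R N => (x.2 *m rmx R s) 0 j) = (fun x => x.2 0 ((s^-1)%g j)).
    by apply: funext => x; rewrite mul_rmx.
  exact: c_t.
Qed.

Lemma cont_MA a : continuous (MA R N a).
Proof.
rewrite /MA; apply: cont_pair; [apply: cont_pair|].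
- apply: contM_C; exact: c_w.
- apply: cont_mx => i j; rewrite (ord1 i).
  have -> : (fun x : Amb R N => (a *: x.1.2) 0 j) = (fun x => a * x.1.2 0 j).
    by apply: funext => x; rewrite mxE.
  apply: contM_C; exact: c_a.
- exact: (@cont_snd _ _).
Qed.


Lemma T_val L x : sval (T_ R N L x) = TA R N L (sval x).
Proof. exact: (liftD_val (@TA_D L)). Qed.
Lemma R_val s x : sval (R_ R N s x) = RA R N s (sval x).
Proof. exact: (liftD_val (@RA_D s)). Qed.
Lemma M_val a (a0 : a != 0) x : sval (M_ R N a x) = MA R N a (sval x).
Proof. exact: (liftD_val (fun y => @MA_D a y a0)). Qed.

Lemma Aut_lift f g : presD f -> presD g -> continuous f -> continuous g ->
  (forall x, g (f x) = x) -> (forall x, f (g x) = x) -> Aut R N (liftD R N f).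
Proof.
move=> pf pg cf cg gf fg; exists (liftD R N g); split.
- by move=> x; apply: Dext; rewrite !liftD_val.
- by move=> x; apply: Dext; rewrite !liftD_val.
- exact: cont_liftD.
- exact: cont_liftD.
Qed.

Lemma Aut_comp f g : Aut R N f -> Aut R N g -> Aut R N (f \o g).
Proof.
move=> [f' [ff' f'f cf cf']] [g' [gg' g'g cg cg']]; exists (g' \o f'); split.
- exact: can_comp.
- exact: can_comp.
- exact: cont_comp.
- exact: cont_comp.
Qed.

Lemma symdiffLL L : symdiff N L L = finset.set0.
Proof. by rewrite /symdiff finset.setDv finset.setU0. Qed.

Lemma symdiff0L L : symdiff N finset.set0 L = L.
Proof. by rewrite /symdiff finset.set0D finset.setD0 finset.set0U. Qed.

Lemma permcompV s : permcomp N s (s^-1)%g = 1%g.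
Proof. by rewrite /permcomp mulVg. Qed.
Lemma permcompV' s : permcomp N (s^-1)%g s = 1%g.
Proof. by rewrite /permcomp mulgV. Qed.

Lemma Aut_T L : Aut R N (T_ R N L).
Proof.
apply: (@Aut_lift _ (TA R N L)); [exact: TA_D|exact: TA_D|exact: cont_TA|exact: cont_TA|..].
all: by move=> x; rewrite TA_TA symdiffLL TA0.
Qed.

Lemma Aut_R s : Aut R N (R_ R N s).
Proof.
apply: (@Aut_lift _ (RA R N (s^-1)%g)); [exact: RA_D|exact: RA_D|exact: cont_RA|exact: cont_RA|..].
- by move=> x; rewrite RA_RA permcompV' RA1.
- by move=> x; rewrite RA_RA permcompV RA1.
Qed.

Lemma Aut_M a : a != 0 -> Aut R N (M_ R N a).
Proof.
move=> a0; have ai0 : a^-1 != 0 by rewrite invr_eq0.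
apply: (@Aut_lift _ (MA R N a^-1)); [exact: (fun y => @MA_D _ y a0)|exact: (fun y => @MA_D _ y ai0)|exact: cont_MA|exact: cont_MA|..].
- by move=> x; rewrite MA_MA mulVf // MA1.
- by move=> x; rewrite MA_MA divff // MA1.
Qed.

Lemma T_T L1 L2 : T_ R N L1 \o T_ R N L2 = T_ R N (symdiff N L1 L2).
Proof. by apply: funext => x; apply: Dext; rewrite /= !T_val TA_TA. Qed.
Lemma R_R s1 s2 : R_ R N s1 \o R_ R N s2 = R_ R N (permcomp N s1 s2).
Proof. by apply: funext => x; apply: Dext; rewrite /= !R_val RA_RA. Qed.
Lemma M_M a b : a != 0 -> b != 0 -> M_ R N a \o M_ R N b = M_ R N (a * b).
Proof.
move=> a0 b0; have ab0 : a * b != 0 by rewrite mulf_neq0.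
by apply: funext => x; apply: Dext; rewrite /= (M_val ab0) (M_val a0) (M_val b0) MA_MA.
Qed.
Lemma T_0 : T_ R N finset.set0 = id.
Proof. by apply: funext => x; apply: Dext; rewrite /= !T_val TA0. Qed.
Lemma R_1 : R_ R N 1%g = id.
Proof. by apply: funext => x; apply: Dext; rewrite /= !R_val RA1. Qed.
Lemma M_1 : M_ R N 1 = id.
Proof. by apply: funext => x; apply: Dext; rewrite /= (M_val (oner_neq0 _)) MA1. Qed.

Lemma formula L1 L2 s1 s2 a1 a2 : a1 != 0 -> a2 != 0 ->
  (T_ R N L1 \o R_ R N s1 \o M_ R N a1) \o (T_ R N L2 \o R_ R N s2 \o M_ R N a2)
  = T_ R N (symdiff N L1 (s1 @: L2)) \o R_ R N (permcomp N s1 s2) \o M_ R N (a1 * a2).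
Proof.
move=> a0 b0; have ab0 : a1 * a2 != 0 by rewrite mulf_neq0.
apply: funext => x; apply: Dext; rewrite /comp (T_val L1) (R_val s1) (M_val a0) (T_val L2) (R_val s2) (M_val b0) (T_val (symdiff N L1 (s1 @: L2))) (R_val (permcomp N s1 s2)) (M_val ab0).
by rewrite MA_TA MA_RA MA_MA RA_TA RA_RA TA_TA.
Qed.

Lemma inCC_N (z : Cx R) : inCC z -> ~~ inCC (- z).
Proof.
case: z => x y; rewrite /inCC /=.
case/orP => [x0|/andP[/eqP -> y0]].
  by rewrite oppr_gt0 ltNge (ltW x0) /= oppr_eq0 (gt_eqF x0).
by rewrite oppr0 ltxx eqxx /= oppr_gt0 ltNge (ltW y0).
Qed.
Lemma inCC_0 (z : Cx R) : ~~ inCC z -> ~~ inCC (- z) -> z = 0.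
Proof.
case: z => x y; rewrite /inCC /= !negb_or !negb_and oppr_gt0 oppr_eq0 oppr_gt0 -!leNgt.
case/andP => x1 h1 /andP[x3 h3].
have ex : x = 0 by apply/le_anti; rewrite x1 x3.
move: h1 h3; rewrite ex eqxx /= => y1 y2.
have ey : y = 0 by apply/le_anti; rewrite y1 y2.
by rewrite ey.
Qed.

Lemma pi_TA L x : piA R N (TA R N L x) = piA R N x.
Proof.
case: x => [[w a] t]; rewrite /piA /TA /=.
rewrite -addrA -opprD; congr (_ - _); rewrite /Tr.
rewrite big_mkcond [X in _ + X = _]big_mkcond [RHS]big_mkcond -big_split.
apply: eq_bigr => l _; rewrite !inE mul_dmx.
case: (l \in L) => /=; last by rewrite add0r.
rewrite opprK; case h: (inCC (a 0 l)).
  by rewrite (negbTE (inCC_N h)) subrr.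
case h2: (inCC (- a 0 l)); first by rewrite addr0.
by rewrite addr0 (inCC_0 (negbT h) (negbT h2)).
Qed.

Lemma pi_RA s x : piA R N (RA R N s x) = piA R N x.
Proof.
case: x => [[w a] t]; rewrite /piA /RA /=; congr (_ - _); rewrite /Tr.
rewrite big_mkcond [RHS]big_mkcond [RHS](reindex_inj (@perm_inj _ (s^-1)%g)) /=.
by apply: eq_bigr => l _; rewrite !inE mul_rmx.
Qed.


Local Notation DF := (Dty -> Dty).

Lemma gen_sub (S : set DF) : subgroup R N S -> gen R N S = S.
Proof.
move=> hS; apply/seteqP; split => f.
- by move/(_ S hS (@subset_refl _ S)).
- by move=> Sf H _ sub; exact: sub.
Qed.

Lemma subgroup_T : subgroup R N [set T_ R N L | L in [set: {set 'I_N}]].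
Proof.
split.
- by move=> f [L _ <-]; exact: Aut_T.
- by exists finset.set0 => //; rewrite T_0.
- by move=> f g [L1 _ <-] [L2 _ <-]; exists (symdiff N L1 L2) => //; rewrite T_T.
- move=> f [L _ <-]; exists (T_ R N L); first by exists L.
  by rewrite T_T symdiffLL T_0.
Qed.

Lemma subgroup_R : subgroup R N [set R_ R N s | s in [set: 'S_N]].
Proof.
split.
- by move=> f [s _ <-]; exact: Aut_R.
- by exists 1%g => //; rewrite R_1.
- by move=> f g [s1 _ <-] [s2 _ <-]; exists (permcomp N s1 s2) => //; rewrite R_R.
- move=> f [s _ <-]; exists (R_ R N (s^-1)%g); first by exists (s^-1)%g.
  by rewrite !R_R permcompV permcompV' R_1.
Qed.

Lemma subgroup_M : subgroup R N [set M_ R N al | al in [set al : C | al != 0]].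
Proof.
split.
- by move=> f [a a0 <-]; exact: Aut_M.
- by exists 1; [exact: oner_neq0|rewrite M_1].
- move=> f g [a a0 <-] [b b0 <-]; exists (a * b); first by rewrite /= mulf_neq0.
  by rewrite (M_M a0 b0).
- move=> f [a a0 <-]; have ai0 : a^-1 != 0 by rewrite invr_eq0.
  exists (M_ R N a^-1); first by exists a^-1.
  by rewrite (M_M a0 ai0) (M_M ai0 a0) divff // mulVf // M_1.
Qed.

Lemma frakT_eq : frakT R N = [set T_ R N L | L in [set: {set 'I_N}]].
Proof. exact: (gen_sub subgroup_T). Qed.
Lemma frakR_eq : frakR R N = [set R_ R N s | s in [set: 'S_N]].
Proof. exact: (gen_sub subgroup_R). Qed.
Lemma frakM_eq : frakM R N = [set M_ R N al | al in [set al : C | al != 0]].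
Proof. exact: (gen_sub subgroup_M). Qed.

Lemma conjM L s a : a != 0 ->
  (T_ R N L \o R_ R N s) \o M_ R N a \o (R_ R N (s^-1)%g \o T_ R N L) = M_ R N a.
Proof.
move=> a0; apply: funext => x; apply: Dext.
rewrite /comp (T_val L) (R_val s) (M_val a0) (R_val (s^-1)%g) (T_val L) (M_val a0).
by rewrite -MA_RA -MA_TA RA_RA permcompV RA1 TA_TA symdiffLL TA0.
Qed.

Lemma Aut_pi_TR L s : Aut_pi R N (T_ R N L \o R_ R N s).
Proof.
split; first exact: (Aut_comp (Aut_T L) (Aut_R s)).
by move=> x; rewrite /comp (T_val L) (R_val s) pi_TA pi_RA.
Qed.

Lemma normal_TR L s : normalizer R N (frakM R N) (T_ R N L \o R_ R N s).
Proof.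
split; first exact: (Aut_comp (Aut_T L) (Aut_R s)).
exists (R_ R N (s^-1)%g \o T_ R N L); split.
- move=> x; apply: Dext; rewrite /comp (R_val (s^-1)%g) (T_val L) (T_val L) (R_val s).
  by rewrite TA_TA symdiffLL TA0 RA_RA permcompV' RA1.
- move=> x; apply: Dext; rewrite /comp (T_val L) (R_val s) (R_val (s^-1)%g) (T_val L).
  by rewrite RA_RA permcompV RA1 TA_TA symdiffLL TA0.
- rewrite frakM_eq; apply/seteqP; split.
  + move=> f [m [a a0 <-] <-]; by exists a => //; rewrite conjM.
  + move=> f [a a0 <-]; exists (M_ R N a); first by exists a.
    exact: conjM.
Qed.

Lemma frakG_TRM L s a : a != 0 -> frakG R N (T_ R N L \o R_ R N s \o M_ R N a).
Proof.
move=> a0; exists (T_ R N L \o R_ R N s), (M_ R N a); split.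
- by split; [exact: Aut_pi_TR|exact: normal_TR].
- by rewrite frakM_eq; exists a.
- by [].
Qed.

Lemma GN_eq : GN R N = [set h | exists (L : {set 'I_N}) (s : 'S_N) (al : C),
                          al != 0 /\ h = T_ R N L \o R_ R N s \o M_ R N al].
Proof.
rewrite /GN frakT_eq frakR_eq frakM_eq; apply/seteqP; split => h.
- case=> f [g [[f1 [f2 [[L _ <-] [s _ <-] ->]]] [a a0 <-] ->]].
  by exists L, s, a; split.
- case=> L [s [a [a0 ->]]]; exists (T_ R N L \o R_ R N s), (M_ R N a); split.
  + by exists (T_ R N L), (R_ R N s); split; [exists L|exists s|].
  + by exists a.
  + by [].
Qed.

Lemma setKperm (s : 'S_N) (L : {set 'I_N}) : s @: ((s^-1)%g @: L) = L.
Proof. by apply/finset.setP => l; rewrite !mem_permset invgK permKV. Qed.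

Lemma subgroup_GN : subgroup R N (GN R N).
Proof.
rewrite GN_eq; split.
- move=> f [L [s [a [a0 ->]]]].
  apply: Aut_comp; [apply: Aut_comp; [exact: Aut_T|exact: Aut_R]|exact: Aut_M].
- exists finset.set0, 1%g, 1; split; first exact: oner_neq0.
  by rewrite T_0 R_1 M_1.
- move=> f g [L1 [s1 [a1 [a10 ->]]]] [L2 [s2 [a2 [a20 ->]]]].
  exists (symdiff N L1 (s1 @: L2)), (permcomp N s1 s2), (a1 * a2); split.
    exact: mulf_neq0.
  exact: formula.
- move=> f [L [s [a [a0 ->]]]]; have ai0 : a^-1 != 0 by rewrite invr_eq0.
  exists (T_ R N ((s^-1)%g @: L) \o R_ R N (s^-1)%g \o M_ R N a^-1).
    by exists ((s^-1)%g @: L), (s^-1)%g, a^-1; split.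
  split.
  + rewrite (formula _ _ _ _ a0 ai0) setKperm symdiffLL permcompV divff //.
    by rewrite T_0 R_1 M_1.
  + rewrite (formula _ _ _ _ ai0 a0) symdiffLL permcompV' mulVf //.
    by rewrite T_0 R_1 M_1.
Qed.

Lemma GN_sub : GN R N `<=` frakG R N.
Proof. rewrite GN_eq => f [L [s [a [a0 ->]]]]; exact: frakG_TRM. Qed.


End P.
Section P2.
Variables (R : realType) (N : nat).
Local Notation C := (Cx R).
Local Notation Dty := (set_type (Dset R N)).
Local Notation DF := (Dty -> Dty).
Definition Lof (e : {ffun 'I_N -> int}) : {set 'I_N} := [set l | e l == -1].
Definition Fiso (x : SP R N) : DF := T_ R N (Lof x.1.1) \o R_ R N x.1.2 \o M_ R N x.2.

Lemma Fiso_hom x y : SPcarrier R N x -> SPcarrier R N y ->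
  Fiso (SPmul R N x y) = Fiso x \o Fiso y.
Proof.
case: x => [[e1 s1] c1]; case: y => [[e2 s2] c2].
move=> /andP[/forallP h1 c10] /andP[/forallP h2 c20].
have E : Lof [ffun l => e1 l * phi N s1 e2 l] = symdiff N (Lof e1) (s1 @: Lof e2).
  apply/finset.setP => l; rewrite /symdiff !inE mem_permset !inE /phi !ffunE.
  by case/orP: (h1 l) => /eqP ->; case/orP: (h2 ((s1^-1)%g l)) => /eqP ->.
rewrite /Fiso /SPmul.
change (T_ R N (Lof [ffun l => e1 l * phi N s1 e2 l]) \o R_ R N (permcomp N s1 s2) \o M_ R N (c1 * c2) = (T_ R N (Lof e1) \o R_ R N s1 \o M_ R N c1) \o (T_ R N (Lof e2) \o R_ R N s2 \o M_ R N c2)).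
by rewrite (formula (Lof e1) (Lof e2) s1 s2 c10 c20) E.
Qed.

Lemma sign_eq (b1 b2 : bool) (t1 t2 : R) : 0 < t1 -> 0 < t2 ->
  (if b1 then - t1 else t1) = (if b2 then - t2 else t2) -> b1 = b2 /\ t1 = t2.
Proof.
move=> t10 t20; case: b1; case: b2 => E.
- by split => //; exact: oppr_inj.
- by move: t10; rewrite -oppr_lt0 E ltNge (ltW t20).
- by move: t20; rewrite -oppr_lt0 -E ltNge (ltW t10).
- by [].
Qed.


Lemma Fiso_inj (hN : (0 < N)%N) x y : SPcarrier R N x -> SPcarrier R N y ->
  Fiso x = Fiso y -> x = y.
Proof.
case: x => [[e1 s1] c1]; case: y => [[e2 s2] c2].
move=> /andP[/forallP h1 c10] /andP[/forallP h2 c20] E.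
pose p : Amb R N := (0, \row_(l < N) (1 : C), \row_(l < N) (((l : nat)%:R + 1) : R)).
have pD : p \in Dset R N.
  by apply/mem_set; apply/forallP => l; rewrite /p /= mxE oner_eq0.
pose xD : Dty := exist _ p pD.
have E2 : sval (T_ R N (Lof e1) (R_ R N s1 (M_ R N c1 xD))) =
          sval (T_ R N (Lof e2) (R_ R N s2 (M_ R N c2 xD))).
  exact: (congr1 (fun f => sval (f xD)) E).
rewrite (T_val (Lof e1)) (R_val s1) (M_val c10) (T_val (Lof e2)) (R_val s2) (M_val c20) in E2.
have E3 : TA R N (Lof e1) (RA R N s1 (MA R N c1 p)) = TA R N (Lof e2) (RA R N s2 (MA R N c2 p)).
  exact: E2.
have K1 L s c l : (TA R N L (RA R N s (MA R N c p))).2 0 l =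
    if l \in L then - (((s^-1)%g l : nat)%:R + 1) else (((s^-1)%g l : nat)%:R + 1).
  by rewrite /TA /RA /MA /p /= mul_dmx mul_rmx mxE.
have K2 L s c l : (TA R N L (RA R N s (MA R N c p))).1.2 0 l = if l \in L then - c else c.
  by rewrite /TA /RA /MA /p /= mul_dmx mul_rmx !mxE mulr1.
have Hl l : (l \in Lof e1) = (l \in Lof e2) /\ (s1^-1)%g l = (s2^-1)%g l.
  have := congr1 (fun z : Amb R N => z.2 0 l) E3; cbv beta; rewrite !K1.
  case/sign_eq; try by rewrite natr1 ltr0Sn.
  move=> -> /addIr /eqP; rewrite eqr_nat => /eqP H; split => //; exact: ord_inj.
have hL : Lof e1 = Lof e2 by apply/finset.setP => l; case: (Hl l).
have hs : s1 = s2.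
  by apply: invg_inj; apply/permP => l; case: (Hl l).
have hc : c1 = c2.
  have := congr1 (fun z : Amb R N => z.1.2 0 (Ordinal hN)) E3; cbv beta; rewrite !K2 hL.
  by case: (_ \in _) => //; exact: oppr_inj.
have he : e1 = e2.
  apply/ffunP => l; have := congr1 (fun A : {set 'I_N} => l \in A) hL; cbv beta; rewrite !inE.
  by case/orP: (h1 l) => /eqP ->; case/orP: (h2 l) => /eqP ->.
by rewrite he hs hc.
Qed.

Lemma Fiso_img : Fiso @` SPcarrier R N = GN R N.
Proof.
rewrite GN_eq; apply/seteqP; split.
- by move=> h [[[e s] c] /andP[_ c0] <-]; exists (Lof e), s, c; split.
- move=> h [L [s [a [a0 ->]]]].
  exists ([ffun l => if l \in L then (-1 : int) else 1], s, a).
    apply/andP; split => //; apply/forallP => l; rewrite ffunE; by case: (l \in L).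
  have EL : Lof [ffun l => if l \in L then (-1 : int) else 1] = L.
    by apply/finset.setP => l; rewrite !inE ffunE; case: (l \in L).
  rewrite /Fiso.
  change (T_ R N (Lof [ffun l => if l \in L then (-1 : int) else 1]) \o R_ R N s \o M_ R N a = T_ R N L \o R_ R N s \o M_ R N a).
  by rewrite EL.
Qed.

End P2.

Unset Implicit Arguments.
Theorem proposition2 (R : realType) (N : nat) (hN : (0 < N)%N) :
  (* T_Lambda, R_sigma, M_alpha (alpha in C^* ) all lie in frak G_N *)
  [/\ (forall L : {set 'I_N}, frakG R N (T_ R N L)),
      (forall s : 'S_N, frakG R N (R_ R N s)),
      (forall al : Cx R, al != 0 -> frakG R N (M_ R N al)),
  (* G_N is exactly the set of the T_Lambda R_sigma M_alpha, and the product
     (composition) of two of them is given by the stated formula *)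
      GN R N = [set h | exists (L : {set 'I_N}) (s : 'S_N) (al : Cx R),
                          al != 0 /\ h = T_ R N L \o R_ R N s \o M_ R N al] &
      (forall (L1 L2 : {set 'I_N}) (s1 s2 : 'S_N) (a1 a2 : Cx R),
          a1 != 0 -> a2 != 0 ->
          (T_ R N L1 \o R_ R N s1 \o M_ R N a1) \o (T_ R N L2 \o R_ R N s2 \o M_ R N a2)
          = T_ R N (symdiff N L1 (s1 @: L2)) \o R_ R N (permcomp N s1 s2) \o M_ R N (a1 * a2))]
  /\
  (* G_N is a subgroup of frak G_N, isomorphic to ({+-1}^N x|_phi S_N) x C^* *)
  [/\ subgroup R N (GN R N), GN R N `<=` frakG R N &
      exists F : SP R N -> (set_type (Dset R N) -> set_type (Dset R N)),
        [/\ (forall x y, SPcarrier R N x -> SPcarrier R N y ->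
               F (SPmul R N x y) = F x \o F y),
            (forall x y, SPcarrier R N x -> SPcarrier R N y -> F x = F y -> x = y)
          & F @` SPcarrier R N = GN R N]].
Proof.
split; split.
- move=> L; have := @frakG_TRM R N L 1%g 1 (oner_neq0 _).
  rewrite (@R_1 R N) (@M_1 R N); apply.
- move=> s; have := @frakG_TRM R N finset.set0 s 1 (oner_neq0 _).
  rewrite (@T_0 R N) (@M_1 R N); apply.
- move=> a a0; have := @frakG_TRM R N finset.set0 1%g a a0.
  rewrite (@T_0 R N) (@R_1 R N); apply.
- exact: (@GN_eq R N).
- move=> L1 L2 s1 s2 a1 a2 a10 a20; exact: (@formula R N L1 L2 s1 s2 a1 a2 a10 a20).
- exact: (@subgroup_GN R N).
- exact: (@GN_sub R N).
- exists (@Fiso R N); split.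
  + move=> x y hx hy; exact: (@Fiso_hom R N x y hx hy).
  + move=> x y hx hy; exact: (@Fiso_inj R N hN x y hx hy).
  + exact: (@Fiso_img R N).
Qed.
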